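(* Let $M$ be a matroid on ground set $S$, let $g\geq 3$ be an integer, and let $\mathcal{C}$ be a family of circuits of $M$ such that for every $1\leq i\leq g-1$ and every $X\subseteq S$ with $|X|=i$ we have $|\{C\in\mathcal{C}:\ |X\cap C|\geq 2\}|\leq i-1$. Then in any rainbow circuit-free coloring of $M$ in which each color is used at most $g-1$ times, the number $q$ of distinct colors satisfies $|\mathcal{C}|/(g-2)\leq q\leq |S|-|\mathcal{C}|$.
   Context: A coloring of $S$ is a partition of $S$ into nonempty color classes; it is rainbow circuit-free if no circuit of $M$ has all its elements of pairwise different colors. *)

(* Defs.v *)
From mathcomp Require Import all_boot all_order all_algebra.
Set Implicit Arguments. Unset Strict Implicit. Unset Printing Implicit Defensive.

Definition matroid_circuits (T : finType) (circ : {set {set T}}) : Prop :=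
  [/\ set0 \notin circ,
      (forall C1 C2, C1 \in circ -> C2 \in circ -> C1 \subset C2 -> C1 = C2) &
      (forall C1 C2 e, C1 \in circ -> C2 \in circ -> C1 != C2 ->
         e \in C1 :&: C2 -> exists2 C3, C3 \in circ & C3 \subset (C1 :|: C2) :\ e)].

(* A coloring of the ground set: a partition into nonempty color classes
   (mathcomp's [partition] requires set0 \notin P). *)
Definition coloring (T : finType) (P : {set {set T}}) : Prop :=
  partition P [set: T].

Definition rainbow (T : finType) (P : {set {set T}}) (A : {set T}) : Prop :=
  forall B, B \in P -> #|A :&: B| <= 1.

Definition rainbow_circuit_free (T : finType) (circ P : {set {set T}}) : Prop :=
  forall C, C \in circ -> ~ rainbow P C.

(* Main.v *)
Require Import Defs.
From mathcomp Require Import all_boot all_order all_algebra.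
From mathcomp Require Import lra zify.
Import Order.TTheory GRing.Theory Num.Theory.

Theorem theorem7 (T : finType) (circ : {set {set T}}) (g : nat)
  (fam : {set {set T}}) :
  matroid_circuits circ ->
  3 <= g ->
  fam \subset circ ->
  (forall i : nat, 1 <= i <= g - 1 -> forall X : {set T}, #|X| = i ->
     #|[set C in fam | 2 <= #|X :&: C|]| <= i - 1) ->
  forall P : {set {set T}},
    coloring P -> rainbow_circuit_free circ P ->
    (forall B, B \in P -> #|B| <= g - 1) ->
    ((#|fam|%:R / (g - 2)%:R <= #|P|%:R :> rat)%R /\
     (#|P|%:R <= #|T|%:R - #|fam|%:R :> rat)%R).
Proof.
move=> _ g3 famsub Hfam P colP rcf Hsz.
have Hpart := colP.
move: colP => /and3P [_ _ P0].
have Bpos : forall B, B \in P -> 0 < #|B|.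
  by move=> B BP; rewrite card_gt0; apply: contraNneq P0 => <-.
have Hex : forall C, C \in fam -> exists2 B, B \in P & 2 <= #|B :&: C|.
  move=> C Cf.
  case: (boolP [exists B in P, 1 < #|C :&: B|]).
    by case/exists_inP => B BP HB; exists B => //; rewrite setIC.
  move/exists_inPn => H; exfalso; apply: (rcf C (subsetP famsub C Cf)).
  by move=> B BP; rewrite leqNgt H.
have K1 : #|fam| <= \sum_(B in P) #|[set C in fam | 2 <= #|B :&: C|]|.
  rewrite -sum1_card.
  apply: (@leq_trans (\sum_(C in fam) \sum_(B in P) (2 <= #|B :&: C|))).
    apply: leq_sum => C Cf; have [B BP HB] := Hex C Cf.
    by rewrite (bigD1 B) //= HB.
  rewrite exchange_big /=; apply: leq_sum => B BP.
  rewrite -sum1_card !big_mkcond /=.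
  rewrite [X in _ <= X]big_mkcond /=.
  by apply: leq_sum => C _; rewrite inE; case: (C \in fam); case: (1 < _).
have K2 : \sum_(B in P) #|[set C in fam | 2 <= #|B :&: C|]|
          <= \sum_(B in P) (#|B| - 1).
  apply: leq_sum => B BP; apply: (Hfam #|B|) => //.
  by rewrite (Bpos B BP) (Hsz B BP).

have K3 : \sum_(B in P) (#|B| - 1) + #|P| = #|T|.
  rewrite -sum1_card -big_split /= -cardsT (card_partition Hpart).
  by apply: eq_bigr => B BP; rewrite subnK // Bpos.
have K4 : \sum_(B in P) (#|B| - 1) <= #|P| * (g - 2).
  rewrite -sum1_card big_distrl /=; apply: leq_sum => B BP.
  rewrite mul1n; have := Hsz B BP; lia.
have A1 : (#|fam| + #|P| <= #|T|)%N by rewrite -K3 leq_add2r (leq_trans K1 K2).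
have A2 : (#|fam| <= #|P| * (g - 2))%N by apply: (leq_trans K1 (leq_trans K2 K4)).
split.
  rewrite ler_pdivrMr; last by rewrite ltr0n; lia.
  by rewrite -natrM ler_nat.
have : (#|fam|%:R + #|P|%:R <= #|T|%:R :> rat)%R by rewrite -natrD ler_nat.
lra.
Qed.
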